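(* Every HW-matrix $A\in\mathcal S^{n\times n}$ has odd degree $n$.
   Context: $\mathcal S=\{0,1,2,3\}$ is the Klein four-group ($\mathbb Z_2$-vector space) with $x+x=0$, $1+2=3$, $1+3=2$, $2+3=1$. A square matrix over $\mathcal S$ is distinguished if it has $1$ on the diagonal and $2$ or $3$ in every off-diagonal entry. $\mathcal P_n$ denotes the power set of $\{1,\dots,n\}$, a $\mathbb Z_2$-algebra with symmetric difference as addition and intersection as multiplication, $0=\emptyset$, $1=\{1,\dots,n\}$. For $U\in\mathcal P_n$, $c_j^U(A)=\sum_{i\in U}A_{ij}$, $c_j(A)=c_j^{\{1..n\}}(A)$, and $J_A(U)=\{j: c_j^U(A)=1\}$. $A\in\mathcal S^{n\times n}$ is an HW-matrix if (i) $A$ is distinguished, (ii) $c_j(A)=0$ for all $j$, (iii) $J_A(U)\ne\emptyset$ for every $U\in\mathcal P_n\setminus\{\emptyset,\{1,\dots,n\}\}$. *)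

(* Defs.v *)
From mathcomp Require Import all_boot all_algebra.
Set Implicit Arguments. Unset Strict Implicit. Unset Printing Implicit Defensive.

(* The Klein four-group S = {0,1,2,3}, encoded as bool * bool with
   componentwise xor:  0 = (F,F), 1 = (T,F), 2 = (F,T), 3 = (T,T).
   Then 1+2 = 3, 1+3 = 2, 2+3 = 1, x+x = 0. *)
Definition S := (bool * bool)%type.
Definition s0 : S := (false, false).
Definition s1 : S := (true, false).
Definition s2 : S := (false, true).
Definition s3 : S := (true, true).
Definition sadd (x y : S) : S := (addb x.1 y.1, addb x.2 y.2).

Definition distinguished n (A : 'M[S]_n) : Prop :=
  forall i j : 'I_n, if i == j then A i j = s1 else (A i j = s2 \/ A i j = s3).

Definition colsumU n (U : {set 'I_n}) (A : 'M[S]_n) (j : 'I_n) : S :=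
  \big[sadd/s0]_(i in U) A i j.

Definition colsum n (A : 'M[S]_n) (j : 'I_n) : S := colsumU setT A j.

Definition JA n (A : 'M[S]_n) (U : {set 'I_n}) : {set 'I_n} :=
  [set j | colsumU U A j == s1].

Definition HW_matrix n (A : 'M[S]_n) : Prop :=
  [/\ distinguished A,
      (forall j, colsum A j = s0) &
      (forall U : {set 'I_n}, U != set0 -> U != setT -> JA A U != set0)].

(* Main.v *)
Require Import Defs.
From mathcomp Require Import all_boot all_algebra.

Lemma bigaddb (T : eqType) (r : seq T) (P : pred T) (F : T -> bool) :
  \big[addb/false]_(i <- r | P i) F i = odd (count (fun i => P i && F i) r).
Proof.
elim: r => [|x r IH]; first by rewrite big_nil.
rewrite big_cons /=; case: (P x) => /=; rewrite IH // oddD; by case: (F x).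
Qed.

Theorem mainTheorem3 (n : nat) (A : 'M[S]_n) :
  (0 < n)%N -> HW_matrix A -> odd n.
Proof.
case: n A => [|n] A // _ [hd hc _].
have := hc ord0; rewrite /colsum /colsumU => /(congr1 snd).
rewrite (big_morph (@snd bool bool) (id2:=s0) (op2:=sadd) (op1:=addb) (id1:=false)) //.
rewrite (eq_bigr (fun i => i != ord0)); last first.
  move=> i _; have := hd i ord0; case: (i == ord0) => /=.
    by move=> ->.
  by case=> ->.
rewrite bigaddb /=.
have -> : count (fun i : 'I_n.+1 => (i \in setT) && (i != ord0)) (index_enum 'I_n.+1)
          = #|predC1 (ord0 : 'I_n.+1)|.
  by rewrite cardE /enum_mem size_filter; apply: eq_count => i; rewrite in_setT.
by rewrite cardC1 card_ord /= => ->.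
Qed.
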